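(* Let $G$ be an abelian group. A function $\phi:G\to\mathbb{H}$ is an extreme point of $\mathcal{P}^{\mathbb{H}}_*(G)$ if and only if $\phi$ is a group homomorphism from $G$ to $\mathbb{S}$. In other words, the extreme boundary of $\mathcal{P}^{\mathbb{H}}_*(G)$ equals the quaternionic dual $G^\delta=\mathrm{Hom}(G,\mathbb{S})$.
   Context: $\mathbb{H}$ is the real quaternion algebra and $\mathbb{S}=\{q\in\mathbb{H}:|q|=1\}$ is the (nonabelian) multiplicative group of unit quaternions. For an abelian group $G$, $\phi:G\to\mathbb{H}$ is positive definite if for all $k$, $g_1,\dots,g_k\in G$, $q_1,\dots,q_k\in\mathbb{H}$, $\sum_{i,j=1}^k\overline{q_i}\,\phi(g_j-g_i)\,q_j$ is a nonnegative real number. $\mathcal{P}^{\mathbb{H}}_*(G)$ is the convex set of positive definite $\phi:G\to\mathbb{H}$ with $\phi(0)=1$. The quaternionic dual $G^\delta$ is the set of all group homomorphisms $G\to\mathbb{S}$ (quaternionic characters). *)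

(* Defs.v *)
From HB Require Import structures.
From mathcomp Require Import all_boot all_order all_algebra.
From mathcomp Require Import reals.
Set Implicit Arguments. Unset Strict Implicit. Unset Printing Implicit Defensive.
Import Order.TTheory GRing.Theory Num.Theory.
Local Open Scope ring_scope.

(* Real quaternions q = q0 + q1 i + q2 j + q3 k. *)
Record quat (R : realType) := Quat { q0 : R; q1 : R; q2 : R; q3 : R }.

Section Quat.
Variable R : realType.
Implicit Types p q : quat R.

Definition qzero : quat R := Quat 0 0 0 0.
Definition qone : quat R := Quat 1 0 0 0.
Definition qadd p q : quat R :=
  Quat (q0 p + q0 q) (q1 p + q1 q) (q2 p + q2 q) (q3 p + q3 q).
Definition qscale (t : R) q : quat R :=
  Quat (t * q0 q) (t * q1 q) (t * q2 q) (t * q3 q).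
(* Hamilton product: i^2 = j^2 = k^2 = ijk = -1. *)
Definition qmul p q : quat R :=
  Quat (q0 p * q0 q - q1 p * q1 q - q2 p * q2 q - q3 p * q3 q)
       (q0 p * q1 q + q1 p * q0 q + q2 p * q3 q - q3 p * q2 q)
       (q0 p * q2 q - q1 p * q3 q + q2 p * q0 q + q3 p * q1 q)
       (q0 p * q3 q + q1 p * q2 q - q2 p * q1 q + q3 p * q0 q).
Definition qconj q : quat R := Quat (q0 q) (- q1 q) (- q2 q) (- q3 q).
Definition qnorm2 q : R := q0 q ^+ 2 + q1 q ^+ 2 + q2 q ^+ 2 + q3 q ^+ 2.
Definition qnorm q : R := Num.sqrt (qnorm2 q).

Definition qnonneg_real q : Prop :=
  [/\ q1 q = 0, q2 q = 0, q3 q = 0 & 0 <= q0 q].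

Definition unit_quat q : Prop := qnorm q = 1.
End Quat.

Section PosDef.
Variables (R : realType) (G : zmodType).

Definition pos_def (phi : G -> quat R) : Prop :=
  forall (k : nat) (g : 'I_k -> G) (q : 'I_k -> quat R),
    qnonneg_real
      (\big[@qadd R/qzero R]_(i < k) \big[@qadd R/qzero R]_(j < k)
          qmul (qmul (qconj (q i)) (phi (g j - g i))) (q j)).

Definition Pstar (phi : G -> quat R) : Prop := pos_def phi /\ phi 0 = qone R.

Definition extreme_Pstar (phi : G -> quat R) : Prop :=
  Pstar phi /\
  forall (f1 f2 : G -> quat R) (t : R), Pstar f1 -> Pstar f2 ->
    0 < t < 1 ->
    (forall x, phi x = qadd (qscale t (f1 x)) (qscale (1 - t) (f2 x))) ->
    (forall x, f1 x = phi x) /\ (forall x, f2 x = phi x).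

Definition quat_character (phi : G -> quat R) : Prop :=
  (forall x, unit_quat (phi x)) /\
  (forall x y, phi (x + y) = qmul (phi x) (phi y)).
End PosDef.

(* Main.v *)
Require Import Defs.
From HB Require Import structures.
From mathcomp Require Import all_boot all_order all_algebra.
From mathcomp Require Import reals.
From mathcomp Require Import ring lra.
Set Implicit Arguments. Unset Strict Implicit. Unset Printing Implicit Defensive.
Import Order.TTheory GRing.Theory Num.Theory.
Local Open Scope ring_scope.

Section QR.
Variable R : realType.
Definition q2t (q : quat R) := (q0 q, q1 q, q2 q, q3 q).
Definition t2q (t : R * R * R * R) := Quat t.1.1.1 t.1.1.2 t.1.2 t.2.
Lemma q2tK : cancel q2t t2q. Proof. by case. Qed.
HB.instance Definition _ := Equality.copy (quat R) (can_type q2tK).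
HB.instance Definition _ := Choice.copy (quat R) (can_type q2tK).

Lemma quatP (p q : quat R) : q0 p = q0 q -> q1 p = q1 q -> q2 p = q2 q -> q3 p = q3 q -> p = q.
Proof. by case: p; case: q => /= ? ? ? ? ? ? ? ? -> -> -> ->. Qed.

Definition qopp (q : quat R) := Quat (- q0 q) (- q1 q) (- q2 q) (- q3 q).
Lemma qaddA : associative (@qadd R).
Proof. by move=> ? ? ?; apply: quatP => /=; ring. Qed.
Lemma qaddC : commutative (@qadd R).
Proof. by move=> ? ?; apply: quatP => /=; ring. Qed.
Lemma qadd0 : left_id (qzero R) (@qadd R).
Proof. by move=> ?; apply: quatP => /=; ring. Qed.
Lemma qaddN : left_inverse (qzero R) qopp (@qadd R).
Proof. by move=> ?; apply: quatP => /=; ring. Qed.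
HB.instance Definition _ := GRing.isZmodule.Build (quat R) qaddA qaddC qadd0 qaddN.
Lemma qmulA : associative (@qmul R).
Proof. by move=> ? ? ?; apply: quatP => /=; ring. Qed.
Lemma qmul1 : left_id (qone R) (@qmul R).
Proof. by move=> ?; apply: quatP => /=; ring. Qed.
Lemma qmulr1 : right_id (qone R) (@qmul R).
Proof. by move=> ?; apply: quatP => /=; ring. Qed.
Lemma qmulDl : left_distributive (@qmul R) +%R.
Proof. by move=> ? ? ?; apply: quatP => /=; ring. Qed.
Lemma qmulDr : right_distributive (@qmul R) +%R.
Proof. by move=> ? ? ?; apply: quatP => /=; ring. Qed.
Lemma qone_neq0 : qone R != 0.
Proof. apply/eqP => /(congr1 (@q0 R)) /= /eqP; by rewrite oner_eq0. Qed.
HB.instance Definition _ := GRing.Zmodule_isNzRing.Build (quat R) qmulA qmul1 qmulr1 qmulDl qmulDr qone_neq0.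

Lemma bigqE I (r : seq I) (P : pred I) (F : I -> quat R) :
  \big[@qadd R/qzero R]_(i <- r | P i) F i = \sum_(i <- r | P i) F i.
Proof. by []. Qed.
Lemma qmulE (p q : quat R) : qmul p q = p * q. Proof. by []. Qed.
Lemma qaddE (p q : quat R) : qadd p q = p + q. Proof. by []. Qed.
Lemma qoppE (p : quat R) : qopp p = - p. Proof. by []. Qed.
Lemma qzeroE : qzero R = 0. Proof. by []. Qed.
Lemma qoneE : qone R = 1. Proof. by []. Qed.
End QR.

Section A.
Variable R : realType.
Local Notation H := (quat R).
Implicit Types p q : H.

Definition re (t : R) : H := Quat t 0 0 0.
Definition qi : H := Quat 0 1 0 0.
Definition qj : H := Quat 0 0 1 0.
Definition qk : H := Quat 0 0 0 1.

Lemma q0D p q : q0 (p + q) = q0 p + q0 q. Proof. by []. Qed.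
Lemma q1D p q : q1 (p + q) = q1 p + q1 q. Proof. by []. Qed.
Lemma q2D p q : q2 (p + q) = q2 p + q2 q. Proof. by []. Qed.
Lemma q3D p q : q3 (p + q) = q3 p + q3 q. Proof. by []. Qed.
Lemma q0N p : q0 (- p) = - q0 p. Proof. by []. Qed.
Lemma q1N p : q1 (- p) = - q1 p. Proof. by []. Qed.
Lemma q2N p : q2 (- p) = - q2 p. Proof. by []. Qed.
Lemma q3N p : q3 (- p) = - q3 p. Proof. by []. Qed.
Lemma q0M p q : q0 (p * q) = q0 p * q0 q - q1 p * q1 q - q2 p * q2 q - q3 p * q3 q. Proof. by []. Qed.
Lemma q1M p q : q1 (p * q) = q0 p * q1 q + q1 p * q0 q + q2 p * q3 q - q3 p * q2 q. Proof. by []. Qed.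
Lemma q2M p q : q2 (p * q) = q0 p * q2 q - q1 p * q3 q + q2 p * q0 q + q3 p * q1 q. Proof. by []. Qed.
Lemma q3M p q : q3 (p * q) = q0 p * q3 q + q1 p * q2 q - q2 p * q1 q + q3 p * q0 q. Proof. by []. Qed.
Lemma q0_0 : q0 (0 : H) = 0. Proof. by []. Qed.
Lemma q1_0 : q1 (0 : H) = 0. Proof. by []. Qed.
Lemma q2_0 : q2 (0 : H) = 0. Proof. by []. Qed.
Lemma q3_0 : q3 (0 : H) = 0. Proof. by []. Qed.
Lemma q0_1 : q0 (1 : H) = 1. Proof. by []. Qed.
Lemma q1_1 : q1 (1 : H) = 0. Proof. by []. Qed.
Lemma q2_1 : q2 (1 : H) = 0. Proof. by []. Qed.
Lemma q3_1 : q3 (1 : H) = 0. Proof. by []. Qed.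

Definition qE := (q0D, q1D, q2D, q3D, q0N, q1N, q2N, q3N, q0M, q1M, q2M, q3M,
  q0_0, q1_0, q2_0, q3_0, q0_1, q1_1, q2_1, q3_1).

Lemma q0sum I (r : seq I) (F : I -> H) : q0 (\sum_(i <- r) F i) = \sum_(i <- r) q0 (F i).
Proof. by elim: r => [|x r IH]; rewrite ?big_nil ?big_cons // q0D IH. Qed.

Lemma qconjD p q : qconj (p + q) = qconj p + qconj q.
Proof. by apply: quatP => /=; ring. Qed.
Lemma qconjN p : qconj (- p) = - qconj p.
Proof. by apply: quatP => /=; ring. Qed.
Lemma qconj0 : qconj (0 : H) = 0.
Proof. by apply: quatP => /=; ring. Qed.
Lemma qconj1 : qconj (1 : H) = 1.
Proof. by apply: quatP => /=; ring. Qed.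
Lemma qconjM p q : qconj (p * q) = qconj q * qconj p.
Proof. by apply: quatP; rewrite /= ?qE /=; ring. Qed.
Lemma qconjK p : qconj (qconj p) = p.
Proof. by apply: quatP => /=; ring. Qed.
Lemma qconj_sum I (r : seq I) (F : I -> H) : qconj (\sum_(i <- r) F i) = \sum_(i <- r) qconj (F i).
Proof. by elim: r => [|x r IH]; rewrite ?big_nil ?big_cons ?qconj0 // qconjD IH. Qed.
Lemma qconj_re t : qconj (re t) = re t.
Proof. by apply: quatP => /=; ring. Qed.
Lemma re_comm t p : re t * p = p * re t.
Proof. by apply: quatP; rewrite !qE /=; ring. Qed.
Lemma qscaleE t p : qscale t p = re t * p.
Proof. by apply: quatP; rewrite !qE /=; ring. Qed.
Lemma conj_mul p : qconj p * p = re (qnorm2 p).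
Proof. by apply: quatP; rewrite !qE /= /qnorm2; ring. Qed.
Lemma mul_conj p : p * qconj p = re (qnorm2 p).
Proof. by apply: quatP; rewrite !qE /= /qnorm2; ring. Qed.
Lemma qnorm2_ge0 p : 0 <= qnorm2 p.
Proof. by rewrite /qnorm2 !addr_ge0 ?sqr_ge0. Qed.
Lemma qnorm2_eq0 p : qnorm2 p = 0 -> p = 0.
Proof.
rewrite /qnorm2 => h.
have h0 := sqr_ge0 (q0 p); have h1 := sqr_ge0 (q1 p).
have h2 := sqr_ge0 (q2 p); have h3 := sqr_ge0 (q3 p).
apply: quatP; rewrite ?qE; apply/eqP; rewrite -sqrf_eq0; apply/eqP; lra.
Qed.
Lemma q0c q : q0 (qconj q) = q0 q. Proof. by []. Qed.
Lemma q1c q : q1 (qconj q) = - q1 q. Proof. by []. Qed.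
Lemma q2c q : q2 (qconj q) = - q2 q. Proof. by []. Qed.
Lemma q3c q : q3 (qconj q) = - q3 q. Proof. by []. Qed.
Lemma q0re t : q0 (re t) = t. Proof. by []. Qed.
Lemma q1re t : q1 (re t) = 0. Proof. by []. Qed.
Lemma q2re t : q2 (re t) = 0. Proof. by []. Qed.
Lemma q3re t : q3 (re t) = 0. Proof. by []. Qed.
Lemma q0one : q0 (qone R) = 1. Proof. by []. Qed.
Lemma q1one : q1 (qone R) = 0. Proof. by []. Qed.
Lemma q2one : q2 (qone R) = 0. Proof. by []. Qed.
Lemma q3one : q3 (qone R) = 0. Proof. by []. Qed.
Lemma q0i : q0 qi = 0. Proof. by []. Qed.
Lemma q1i : q1 qi = 1. Proof. by []. Qed.
Lemma q2i : q2 qi = 0. Proof. by []. Qed.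
Lemma q3i : q3 qi = 0. Proof. by []. Qed.
Lemma q0j : q0 qj = 0. Proof. by []. Qed.
Lemma q1j : q1 qj = 0. Proof. by []. Qed.
Lemma q2j : q2 qj = 1. Proof. by []. Qed.
Lemma q3j : q3 qj = 0. Proof. by []. Qed.
Lemma q0k : q0 qk = 0. Proof. by []. Qed.
Lemma q1k : q1 qk = 0. Proof. by []. Qed.
Lemma q2k : q2 qk = 0. Proof. by []. Qed.
Lemma q3k : q3 qk = 1. Proof. by []. Qed.

Definition qEx := (q0D, q1D, q2D, q3D, q0N, q1N, q2N, q3N, q0M, q1M, q2M, q3M,
  q0_0, q1_0, q2_0, q3_0, q0_1, q1_1, q2_1, q3_1, q0c, q1c, q2c, q3c,
  q0re, q1re, q2re, q3re, q0one, q1one, q2one, q3one,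
  q0i, q1i, q2i, q3i, q0j, q1j, q2j, q3j, q0k, q1k, q2k, q3k).

Definition qED := (q0D, q1D, q2D, q3D).
Definition qEN := (q0N, q1N, q2N, q3N).
Definition qEM := (q0M, q1M, q2M, q3M).
Definition qEc := (q0c, q1c, q2c, q3c).
Definition qEre := (q0re, q1re, q2re, q3re).
Definition qEone := (q0one, q1one, q2one, q3one, q0_1, q1_1, q2_1, q3_1, q0_0, q1_0, q2_0, q3_0).
Definition qEijk := (q0i, q1i, q2i, q3i, q0j, q1j, q2j, q3j, q0k, q1k, q2k, q3k).
End A.
Ltac qcomp R := rewrite -?(@qmulE R) -?(@qaddE R) -?(@qoppE R) -?(@qzeroE R) -?(@qoneE R);
  cbn [q0 q1 q2 q3 qmul qadd qopp qconj qone qzero re qi qj qk qscale].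
Ltac qsimp R := rewrite ?(q0D, q1D, q2D, q3D) ?(q0N, q1N, q2N, q3N) ?(q0M, q1M, q2M, q3M)
  ?(q0c, q1c, q2c, q3c) ?(@q0re R, @q1re R, @q2re R, @q3re R)
  ?(@q0i R, @q1i R, @q2i R, @q3i R, @q0j R, @q1j R, @q2j R, @q3j R, @q0k R, @q1k R, @q2k R, @q3k R)
  ?(@q0one R, @q1one R, @q2one R, @q3one R, @q0_1 R, @q1_1 R, @q2_1 R, @q3_1 R, @q0_0 R, @q1_0 R, @q2_0 R, @q3_0 R).

Section B.
Variables (R : realType) (G : zmodType).
Local Notation H := (quat R).
Implicit Types (f phi : G -> H).

Definition qform f (s : seq (G * H)) : H :=
  \sum_(p <- s) \sum_(p' <- s) qconj p.2 * f (p'.1 - p.1) * p'.2.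

Lemma pd_seq f : pos_def f <-> forall s, qnonneg_real (qform f s).
Proof.
split.
- move=> pd s; have := pd (size s) (fun i => (nth (0, 0) s i).1) (fun i => (nth (0,0) s i).2).
  rewrite /qform !bigqE (big_nth (0,0)) big_mkord.
  congr qnonneg_real; apply: eq_bigr => i _.
  by rewrite bigqE (big_nth (0,0)) big_mkord.
- move=> h k g q; have := h [seq (g i, q i) | i <- index_enum 'I_k].
  rewrite /qform !bigqE big_map; congr qnonneg_real; apply: eq_bigr => i _.
  by rewrite bigqE big_map.
Qed.

Lemma form2 f x1 r1 x2 r2 : qform f [:: (x1, r1); (x2, r2)] =
  qconj r1 * f 0 * r1 + qconj r1 * f (x2 - x1) * r2 + qconj r2 * f (x1 - x2) * r1
  + qconj r2 * f 0 * r2.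
Proof. by rewrite /qform !big_cons !big_nil /= !subrr !addr0 !addrA. Qed.

Lemma pd_f0 f : pos_def f -> qnonneg_real (f 0).
Proof.
move/pd_seq/(_ [:: (0, 1)]); rewrite /qform !big_cons !big_nil /= subrr !addr0.
by rewrite qconj1 mul1r mulr1.
Qed.

Lemma pd_herm f x : pos_def f -> f (- x) = qconj (f x).
Proof.
move=> pd; have [a1 a2 a3 a0] := pd_f0 pd.
have E r := (pd_seq f).1 pd [:: (0, 1); (x, r)].
move: (E 1) (E (qi R)) (E (qj R)) (E (qk R)); rewrite !form2 !subr0 !sub0r.
move=> [] + + + _ [] + + + _ [] + + + _ [] + + + _.
qcomp R; rewrite a1 a2 a3 => *.
apply: quatP; qcomp R; lra.
Qed.

Lemma pd_real0 f : pos_def f -> f 0 = re (q0 (f 0)).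
Proof. by move=> /pd_f0 [a1 a2 a3 _]; apply: quatP => //=. Qed.

Lemma pd_bound f x : pos_def f ->
  2 * qnorm2 (f x) <= q0 (f 0) * (1 + qnorm2 (f x)).
Proof.
move=> pd; have [a1 a2 a3 a0] := pd_f0 pd.
have [_ _ _] := (pd_seq f).1 pd [:: (0, 1); (x, - qconj (f x))].
rewrite form2 subr0 sub0r (pd_herm _ pd); qcomp R; rewrite a1 a2 a3 /qnorm2.
move=> h; lra.
Qed.

Lemma pd_zero f x : pos_def f -> f 0 = 0 -> f x = 0.
Proof.
move=> pd f0; have := pd_bound x pd; rewrite f0 q0_0 mul0r => h.
apply: qnorm2_eq0; have := qnorm2_ge0 (f x); lra.
Qed.

Lemma pstar_bound f x : Pstar f -> qnorm2 (f x) <= 1.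
Proof. by move=> [pd f0]; have := pd_bound x pd; rewrite f0 /=; lra. Qed.
End B.

Section C.
Variables (R : realType) (G : zmodType).
Local Notation H := (quat R).
Implicit Types (f phi : G -> H).

Lemma pd_shift f (al be : H) (a : G) : pos_def f ->
  pos_def (fun x => qconj al * f x * al + qconj al * f (x + a) * be
                    + qconj be * f (x - a) * al + qconj be * f x * be).
Proof.
move=> /pd_seq pd; apply/pd_seq => s.
suff -> : qform (fun x => qconj al * f x * al + qconj al * f (x + a) * be
                    + qconj be * f (x - a) * al + qconj be * f x * be) s =
  qform f ([seq (p.1, al * p.2) | p <- s] ++ [seq (p.1 + a, be * p.2) | p <- s]) by apply: pd.
rewrite /qform [in RHS]big_cat /= !big_map.
under [in RHS]eq_bigr do rewrite big_cat /= !big_map.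
rewrite [in RHS]addrC.
under [in RHS]eq_bigr do rewrite big_cat /= !big_map.
rewrite [in RHS]addrC.
rewrite -!big_split /=; apply: eq_bigr => p _; rewrite -!big_split /=.
apply: eq_bigr => p' _.
have e1 : p'.1 + a - p.1 = p'.1 - p.1 + a by rewrite addrAC.
have e2 : p'.1 - (p.1 + a) = p'.1 - p.1 - a by rewrite opprD addrA.
have e3 : p'.1 + a - (p.1 + a) = p'.1 - p.1 by rewrite opprD addrACA subrr addr0.
rewrite e1 e2 e3 !qconjM !mulrDr !mulrDl !mulrA.
by rewrite -!addrA; congr (_ + _); rewrite addrC -!addrA; congr (_ + _); rewrite addrC.
Qed.

Lemma re0 : @re R 0 = 0. Proof. by apply: quatP. Qed.
Lemma reM (s t : R) : re (s * t) = re s * re t.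
Proof. by apply: quatP; qcomp R; ring. Qed.
Lemma reD (s t : R) : re (s + t) = re s + re t.
Proof. by apply: quatP; qcomp R; ring. Qed.
Lemma re1 : @re R 1 = 1. Proof. by apply: quatP. Qed.

Lemma pd_scale f t : pos_def f -> 0 <= t -> pos_def (fun x => re t * f x).
Proof.
move=> /pd_seq pd t0; apply/pd_seq => s.
have [h1 h2 h3 h4] := pd s.
have -> : qform (fun x => re t * f x) s = re t * qform f s.
  rewrite /qform mulr_sumr; apply: eq_bigr => p _; rewrite mulr_sumr.
  by apply: eq_bigr => p' _; rewrite !mulrA re_comm.
split; qcomp R; rewrite ?h1 ?h2 ?h3; try ring.
rewrite !mulr0 !subr0; exact: mulr_ge0.
Qed.

Lemma ext_split phi psi1 psi2 M : extreme_Pstar phi -> pos_def psi1 -> pos_def psi2 ->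
  0 < M -> (forall x, psi1 x + psi2 x = re M * phi x) ->
  forall x, psi1 x = re (q0 (psi1 0)) * phi x.
Proof.
move=> [[pdp p0] ext] pd1 pd2 M0 hs.
have [_ _ _ l1ge] := pd_f0 pd1; have [_ _ _ l2ge] := pd_f0 pd2.
set l1 := q0 (psi1 0) in l1ge *; set l2 := q0 (psi2 0) in l2ge.
have e1 := pd_real0 pd1; have e2 := pd_real0 pd2.
have hM : l1 + l2 = M.
  have := congr1 (@q0 R) (hs 0); rewrite p0 e1 e2; qcomp R; rewrite /l1 /l2; lra.
have [l10|l1n0] := eqVneq l1 0.
  move=> x; rewrite l10 re0 mul0r; apply: pd_zero pd1 _; by rewrite e1 -/l1 l10 re0.
have [l20|l2n0] := eqVneq l2 0.
  move=> x; have := hs x; rewrite (@pd_zero _ _ psi2 x pd2) ?addr0; last by rewrite e2 -/l2 l20 re0.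
  by rewrite -hM l20 addr0.
have l1p : 0 < l1 by rewrite lt_def l1n0.
have l2p : 0 < l2 by rewrite lt_def l2n0.
have P1 : Pstar (fun x => re (l1^-1) * psi1 x).
  split; first by apply: pd_scale => //; rewrite invr_ge0.
  by rewrite e1 -reM mulVf.
have P2 : Pstar (fun x => re (l2^-1) * psi2 x).
  split; first by apply: pd_scale => //; rewrite invr_ge0.
  by rewrite e2 -reM mulVf.
have t01 : 0 < l1 / M < 1.
  apply/andP; split; first by rewrite divr_gt0.
  by rewrite ltr_pdivrMr // mul1r -hM ltrDl.
have := ext _ _ (l1 / M) P1 P2 t01.
case.
  move=> x; rewrite !qscaleE !mulrA -!reM.
  have := hs x; rewrite -hM => hx.
  have hM0 : l1 + l2 != 0 by rewrite hM gt_eqF.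
  have E : phi x = re ((l1 + l2)^-1) * (psi1 x + psi2 x).
    by rewrite hx mulrA -reM mulVf // re1 mul1r.
  rewrite E mulrDr; congr (_ + _); congr (re _ * _); field; by rewrite ?l1n0 ?l2n0 ?hM0.
move=> h _ x; rewrite -h mulrA -reM divff // re1 mul1r //.
Qed.

Lemma CS0 phi s g : Pstar phi -> q0 (qform phi s) = 0 ->
  \sum_(p <- s) phi (p.1 - g) * p.2 = 0.
Proof.
move=> [pd p0] f0; set S := \sum_(p <- s) _.
have [_ _ _ h] := (pd_seq phi).1 pd (s ++ [:: (g, - S)]).
move: h; rewrite /qform big_cat /= big_cons big_nil addr0 /=.
under eq_bigr do rewrite big_cat /= big_cons big_nil addr0 /=.
rewrite big_cat /= big_cons big_nil addr0 /= big_split /= subrr p0 (_ : qone R = 1) // mulr1.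
have -> : \sum_(i <- s) qconj i.2 * phi (g - i.1) * - S = qconj S * - S.
  rewrite /S qconj_sum mulr_suml; apply: eq_bigr => p _.
  by rewrite -[g - p.1]opprB (pd_herm _ pd) qconjM.
have -> : \sum_(j <- s) qconj (- S) * phi (j.1 - g) * j.2 = qconj (-S) * S.
  by rewrite /S mulr_sumr; apply: eq_bigr => p _; rewrite mulrA.
rewrite !qconjN mulrN mulNr mulNr mulrN opprK conj_mul; qcomp R; rewrite f0 => h.
apply: qnorm2_eq0; have := qnorm2_ge0 S; move: h; rewrite /qnorm2; nra.
Qed.
End C.

Section D.
Variables (R : realType) (G : zmodType).
Local Notation H := (quat R).
Implicit Types (f phi : G -> H).

Lemma qcomp (p q : H) : p = q -> [/\ q0 p = q0 q, q1 p = q1 q, q2 p = q2 q & q3 p = q3 q].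
Proof. by move=> ->. Qed.

Definition pd_shift_fun phi (al be : H) (a : G) := (fun x => qconj al * phi x * al + qconj al * phi (x + a) * be
                    + qconj be * phi (x - a) * al + qconj be * phi x * be).

Lemma ext_D1 phi x a : extreme_Pstar phi ->
  phi (x + a) + phi (x - a) = re (2 * q0 (phi a)) * phi x.
Proof.
move=> ext; have [[pd p0] _] := ext.
have pd1 := pd_shift 1 1 a pd; have pd2 := pd_shift 1 (-1) a pd.
have M0 : (0:R) < 4 by [].
have hs : forall y, pd_shift_fun phi 1 1 a y + pd_shift_fun phi 1 (-1) a y = re 4 * phi y.
  by move=> y; apply: quatP; rewrite /pd_shift_fun; qcomp R; lra.
have := ext_split ext pd1 pd2 M0 hs x.
rewrite /pd_shift_fun /= add0r sub0r (pd_herm _ pd) p0.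
move=> /qcomp [].
qcomp R; move=> h0 h1 h2 h3.
apply: quatP; qcomp R; lra.
Qed.

Lemma herm_c phi y : Pstar phi -> q0 (phi (- y)) = q0 (phi y).
Proof. by move=> [pd _]; rewrite (pd_herm _ pd). Qed.

Lemma c_dal phi x a : extreme_Pstar phi ->
  q0 (phi (x + a)) + q0 (phi (x - a)) = 2 * q0 (phi a) * q0 (phi x).
Proof.
move=> ext; have := ext_D1 x a ext; move=> /qcomp [+ _ _ _].
qcomp R; move=> h; lra.
Qed.

Lemma RD phi x a : extreme_Pstar phi ->
  (q0 (phi (x - a)) - q0 (phi x) * q0 (phi a)) ^+ 2 =
  (1 - q0 (phi x) ^+ 2) * (1 - q0 (phi a) ^+ 2).
Proof.
move=> ext; have [[pd p0] _] := ext.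
have h1 := c_dal x x ext; have h2 := c_dal a a ext.
have h3 := c_dal (x + a) (x - a) ext; have h4 := c_dal x a ext.
rewrite !subrr p0 /= in h1 h2.
have e1 : x + a + (x - a) = x + x by rewrite addrACA subrr addr0.
have e2 : x + a - (x - a) = a + a by rewrite opprB addrC addrA subrK.
rewrite e1 e2 in h3.
have e3 : q0 (phi (x + a)) = 2 * q0 (phi a) * q0 (phi x) - q0 (phi (x - a)) by lra.
rewrite e3 in h3.
rewrite !expr2; nra.
Qed.

Lemma collin phi a x : extreme_Pstar phi -> 1 - q0 (phi a) ^+ 2 != 0 ->
  let l := (q0 (phi (x - a)) - q0 (phi x) * q0 (phi a)) / (1 - q0 (phi a) ^+ 2) in
  [/\ q1 (phi x) = l * q1 (phi a), q2 (phi x) = l * q2 (phi a) & q3 (phi x) = l * q3 (phi a)].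
Proof.
move=> ext Sa0; have [[pd p0] _] := ext.
have hR := RD x a ext.
set m := q0 (phi (x - a)) - q0 (phi x) * q0 (phi a).
set Sa := 1 - q0 (phi a) ^+ 2.
move=> l.
set s := [:: (x, 1); (0, re (l * q0 (phi a) - q0 (phi x))); (a, re (- l))].
have F0 : q0 (qform phi s) = 0.
  rewrite /qform /s !big_cons !big_nil /= !addr0 !subrr !subr0 !sub0r -[a - x]opprB.
  rewrite !(pd_herm _ pd) p0; qcomp R.
  have key : (1 - q0 (phi x) ^+ 2) - 2 * l * m + l ^+ 2 * Sa = 0.
    have -> : (1 - q0 (phi x) ^+ 2) - 2 * l * m + l ^+ 2 * Sa =
              ((1 - q0 (phi x) ^+ 2) * Sa - m ^+ 2) / Sa by rewrite /l; field.
    by rewrite hR subrr mul0r.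
  move: key; rewrite /m /Sa !expr2 => key; lra.
have := @CS0 _ _ phi s 0 (conj pd p0) F0.
rewrite /s !big_cons big_nil /= !subr0 addr0 p0 => /qcomp [_].
qcomp R; move=> *; split; lra.
Qed.

Lemma case0 phi a x : extreme_Pstar phi -> 1 - q0 (phi a) ^+ 2 = 0 ->
  phi (x + a) = phi a * phi x.
Proof.
move=> ext Sa0; have [[pd p0] _] := ext.
have hb := pstar_bound a (conj pd p0); move: hb; rewrite /qnorm2 => hb.
have v1 : q1 (phi a) = 0 by nra.
have v2 : q2 (phi a) = 0 by nra.
have v3 : q3 (phi a) = 0 by nra.
set s := [:: (a, 1); (0, re (- q0 (phi a)))].
have F0 : q0 (qform phi s) = 0.
  rewrite /s form2 !subr0 !sub0r !(pd_herm _ pd) p0; qcomp R.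
  move: Sa0; rewrite !expr2 => Sa0; lra.
have := @CS0 _ _ phi s (- x) (conj pd p0) F0.
rewrite /s !big_cons big_nil /= !sub0r !opprK addr0 (addrC a x) => /qcomp [].
qcomp R; move=> *; apply: quatP; qcomp R; rewrite v1 v2 v3; lra.
Qed.

Lemma hom_case phi a u x : extreme_Pstar phi -> q0 u = 0 -> 0 < qnorm2 u ->
  (forall y, exists t, [/\ q1 (phi y) = t * q1 u, q2 (phi y) = t * q2 u & q3 (phi y) = t * q3 u]) ->
  phi (x + a) = phi a * phi x.
Proof.
move=> ext u0 n0 col; have [[pd p0] _] := ext.
have pd1 := pd_shift 1 u a pd; have pd2 := pd_shift 1 (-u) a pd.
have M0 : 0 < 2 + 2 * qnorm2 u by lra.
have hs : forall y, pd_shift_fun phi 1 u a y + pd_shift_fun phi 1 (-u) a y = re (2 + 2 * qnorm2 u) * phi y.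
  move=> y; have [t [t1 t2 t3]] := col y.
  apply: quatP; rewrite /pd_shift_fun; qcomp R; rewrite t1 t2 t3 u0 /qnorm2 u0; ring.
have E := ext_split ext pd1 pd2 M0 hs x.
move: E; rewrite /pd_shift_fun /= add0r sub0r (pd_herm _ pd) p0 => /qcomp [].
have [tx [x1 x2 x3]] := col x.
have [tA [A1 A2 A3]] := col (x + a).
have [tB [B1 B2 B3]] := col (x - a).
have [ta [a1 a2 a3]] := col a.
have [D0 D1 D2 D3] := qcomp (ext_D1 x a ext).
move: D0 D1 D2 D3.
qcomp R; rewrite x1 x2 x3 A1 A2 A3 B1 B2 B3 a1 a2 a3 u0 => D0 D1 D2 D3 E0 E1 E2 E3.
set n := qnorm2 u in n0.
set c := q0 (phi x); set cA := q0 (phi (x + a)); set cB := q0 (phi (x - a)); set ca := q0 (phi a).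
have Y : n * (tB - tA + 2 * ta * c) = 0.
  rewrite /n /qnorm2 u0; move: E0; rewrite /c /ca /cA /cB; clear -ext; lra.
have nn0 : n != 0 by rewrite gt_eqF.
have Y' : tB - tA + 2 * ta * c = 0 by move: Y => /eqP; rewrite mulf_eq0 (negbTE nn0) /= => /eqP.
have e1 : q1 u * (cA - cB + 2 * ta * n * tx) = 0.
  rewrite /n /qnorm2 u0; move: E1; rewrite /c /ca /cA /cB; clear -ext; lra.
have e2 : q2 u * (cA - cB + 2 * ta * n * tx) = 0.
  rewrite /n /qnorm2 u0; move: E2; rewrite /c /ca /cA /cB; clear -ext; lra.
have e3 : q3 u * (cA - cB + 2 * ta * n * tx) = 0.
  rewrite /n /qnorm2 u0; move: E3; rewrite /c /ca /cA /cB; clear -ext; lra.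
have X : n * (cA - cB + 2 * ta * n * tx) = 0.
  transitivity (q1 u * (q1 u * (cA - cB + 2 * ta * n * tx)) + q2 u * (q2 u * (cA - cB + 2 * ta * n * tx))
    + q3 u * (q3 u * (cA - cB + 2 * ta * n * tx))).
    by rewrite /n /qnorm2 u0; ring.
  by rewrite e1 e2 e3; ring.
have X' : cA - cB + 2 * ta * n * tx = 0 by move: X => /eqP; rewrite mulf_eq0 (negbTE nn0) /= => /eqP.
have Z1 : (tB - tA + 2 * ta * c) * q1 u = 0 by rewrite Y' mul0r.
have Z2 : (tB - tA + 2 * ta * c) * q2 u = 0 by rewrite Y' mul0r.
have Z3 : (tB - tA + 2 * ta * c) * q3 u = 0 by rewrite Y' mul0r.
move: X'; rewrite /n /qnorm2 u0 => X'.
apply: quatP; qcomp R; rewrite ?x1 ?x2 ?x3 ?A1 ?A2 ?A3 ?a1 ?a2 ?a3;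
  [move: D0 X' | move: D1 Z1 | move: D2 Z2 | move: D3 Z3]; rewrite /c /ca /cA /cB; clear -ext; lra.
Qed.
End D.

Section E.
Variables (R : realType) (G : zmodType).
Local Notation H := (quat R).
Implicit Types (f phi : G -> H).

Lemma qnorm_eq1 (p : H) : qnorm p = 1 <-> qnorm2 p = 1.
Proof.
rewrite /qnorm; split => h.
  by rewrite -[qnorm2 p]sqr_sqrtr ?qnorm2_ge0 // h expr1n.
by rewrite h sqrtr1.
Qed.

Lemma ext_hom phi x a : extreme_Pstar phi -> phi (x + a) = phi a * phi x.
Proof.
move=> ext.
have [Sa0|Sa0] := eqVneq (1 - q0 (phi a) ^+ 2) 0; first exact: case0.
have col y := collin y ext Sa0.
have [/andP [/andP [/eqP z1 /eqP z2] /eqP z3]|hz] :=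
  boolP ((q1 (phi a) == 0) && (q2 (phi a) == 0) && (q3 (phi a) == 0)).
  apply: (@hom_case _ _ phi a (qi R) x ext) => //.
    by rewrite /qnorm2 /=; lra.
  move=> y; exists 0; have [d1 d2 d3] := col y.
  by rewrite d1 d2 d3 z1 z2 z3 !mulr0 !mul0r.
apply: (@hom_case _ _ phi a (Quat 0 (q1 (phi a)) (q2 (phi a)) (q3 (phi a))) x ext) => //.
  rewrite lt_def qnorm2_ge0 andbT; apply/eqP => /qnorm2_eq0 /qcomp [_].
  by cbn [q0 q1 q2 q3 qzero]; rewrite -qzeroE; cbn [q0 q1 q2 q3 qzero] => h1 h2 h3; move: hz; rewrite h1 h2 h3 eqxx.
move=> y; have [d1 d2 d3] := col y.
by eexists; split; [exact: d1 | exact: d2 | exact: d3].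
Qed.

Lemma ext_char phi : extreme_Pstar phi -> quat_character phi.
Proof.
move=> ext; have [[pd p0] _] := ext.
have hom x y : phi (x + y) = phi x * phi y by rewrite addrC ext_hom.
split => // x; apply/qnorm_eq1.
have := hom (- x) x; rewrite addNr p0 (pd_herm _ pd) conj_mul => /qcomp [+ _ _ _].
by qcomp R; move=> <-.
Qed.

Lemma char0 phi : quat_character phi -> phi 0 = 1.
Proof.
move=> [un hom]; have h0 := hom 0 0; rewrite addr0 qmulE in h0.
have n0 : qconj (phi 0) * phi 0 = 1.
  by rewrite conj_mul (qnorm_eq1 _).1 ?un //; apply: quatP.
transitivity (qconj (phi 0) * phi 0 * phi 0); first by rewrite n0 mul1r.
by rewrite -mulrA -h0 n0.
Qed.

Lemma charN phi x : quat_character phi -> phi (- x) = qconj (phi x).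
Proof.
move=> ch; have [un hom] := ch.
have n0 : qconj (phi x) * phi x = 1.
  by rewrite conj_mul (qnorm_eq1 _).1 ?un //; apply: quatP.
transitivity (qconj (phi x) * phi x * phi (- x)); first by rewrite n0 mul1r.
by rewrite -mulrA -(qmulE (phi x) (phi (- x))) -hom addrN char0 // mulr1.
Qed.

Lemma char_pd phi : quat_character phi -> pos_def phi.
Proof.
move=> ch; have [un hom] := ch; apply/pd_seq => s.
set S := \sum_(p <- s) phi p.1 * p.2.
have -> : qform phi s = qconj S * S.
  rewrite /qform /S qconj_sum mulr_suml; apply: eq_bigr => p _.
  rewrite mulr_sumr; apply: eq_bigr => p' _.
  by rewrite addrC hom qmulE (charN _ ch) qconjM !mulrA.
by rewrite conj_mul; split => //=; apply: qnorm2_ge0.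
Qed.

Lemma char_ext phi : quat_character phi -> extreme_Pstar phi.
Proof.
move=> ch; have [un hom] := ch.
split; first by split; [exact: char_pd | exact: char0].
move=> f1 f2 t P1 P2 /andP [t0 t1] hx.
have key x : f1 x = phi x /\ f2 x = phi x.
  have b1 := pstar_bound x P1; have b2 := pstar_bound x P2.
  have n1 := (qnorm_eq1 _).1 (un x).
  move: (hx x) b1 b2 n1; rewrite !qscaleE /qnorm2.
  move: (f1 x) (f2 x) (phi x) => [a0 a1 a2 a3] [b0 b1 b2 b3] p ->.
  qcomp R; move=> h1 h2 hn.
  have k : t * (1 - t) * ((a0 - b0) ^+ 2 + (a1 - b1) ^+ 2 + (a2 - b2) ^+ 2 + (a3 - b3) ^+ 2) <= 0.
    nra.
  have tt : 0 < t * (1 - t) by apply: mulr_gt0; lra.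
  have k2 : (a0 - b0) ^+ 2 + (a1 - b1) ^+ 2 + (a2 - b2) ^+ 2 + (a3 - b3) ^+ 2 <= 0.
    by rewrite -(pmulr_rle0 _ tt).
  have s0 := sqr_ge0 (a0 - b0); have s1 := sqr_ge0 (a1 - b1).
  have s2 := sqr_ge0 (a2 - b2); have s3 := sqr_ge0 (a3 - b3).
  have e0 : a0 = b0 by apply/eqP; rewrite -subr_eq0 -sqrf_eq0; apply/eqP; lra.
  have e1 : a1 = b1 by apply/eqP; rewrite -subr_eq0 -sqrf_eq0; apply/eqP; lra.
  have e2 : a2 = b2 by apply/eqP; rewrite -subr_eq0 -sqrf_eq0; apply/eqP; lra.
  have e3 : a3 = b3 by apply/eqP; rewrite -subr_eq0 -sqrf_eq0; apply/eqP; lra.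
  subst; split; apply: quatP => /=; ring.
by split => x; have [] := key x.
Qed.
End E.


Theorem mainTheorem11 (R : realType) (G : zmodType) (phi : G -> quat R) :
  extreme_Pstar phi <-> quat_character phi.
Proof. split; [exact: ext_char | exact: char_ext]. Qed.
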